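(* In the setting below, for $n$ participants, the protocol consisting of the setup phase, Round 1 and Rounds 2–3 is correct, i.e. at the end every participant's balance is $0$ (and the shared address is empty), and, apart from the setup, it uses exactly $3\cdot n$ transactions.
   Context: Setting (Conspiracy Santa). There are $n$ participants $P_1,\dots,P_n$. Expenses are organized in exchange groups (in Conspiracy Santa: for each participant, the other $n-1$ participants form a group, choose a gift for him, one or more of them buy it, and its value is shared equally among the $n-1$ group members). All participants know a fixed upper bound $B$ (a positive integer, in cents) on the value of any gift. Setup phase: in each group every payment is broadcast to the group members, each member computes the in-group share (total paid in the group divided by the number of group members); each participant adds his in-group shares and subtracts his own expenses, obtaining his balance $p_i$, assumed to be an integer number of cents (shares may be unevenly split up to one cent). Thus $\sum_i p_i=0$; $p_i>0$ means $P_i$ owes money, $p_i<0$ means $P_i$ must be reimbursed. Sending $x$ cents decreases the sender's balance by $x$ and increases the receiver's balance by $x$. Participants also create anonymous cryptocurrency addresses, and one shared anonymous address (the piggy bank) whose secret key all participants know. All $x \bmod B$ denote the representative in $\{0,\dots,B-1\}$. Round 1 (private transactions on secure channels): $P_1$ samples $t_1$ uniformly in $\{1,\dots,B\}$, sets $p_1\leftarrow p_1-t_1$ and sends $t_1$ cents to $P_2$, who sets $p_2\leftarrow p_2+t_1$. For $i=2,\dots,n$: $P_i$ sets $t_i=p_i \bmod B$, and if $t_i=0$ sets $t_i=B$; then $p_i\leftarrow p_i-t_i$ and $P_i$ sends $t_i$ cents to $P_{i+1}$ (where $P_{n+1}=P_1$), who adds $t_i$ to his balance. Round 2: every $P_i$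 sends $B$ cents to the shared address and sets $p_i\leftarrow p_i-B$. Round 3: every $P_i$ with $p_i<0$ makes, for each of $-p_i/B$ times, the shared address pay $B$ cents to one of his own (distinct) anonymous addresses, and then sets $p_i\leftarrow 0$. *)

(* Defs.v *)
From HB Require Import structures.
From mathcomp Require Import all_boot all_order all_algebra.
Set Implicit Arguments. Unset Strict Implicit. Unset Printing Implicit Defensive.
Import Order.TTheory GRing.Theory Num.Theory.

Local Open Scope ring_scope.

(* Participants P_1..P_n are indexed 0..n-1; P_{n+1} = P_1 is index 0. *)

Inductive tx :=
| Priv of nat & nat & int      (* private transfer: from, to, amount *)
| ToPiggy of nat & int         (* participant pays amount to the shared address *)
| FromPiggy of nat & int.      (* shared address pays amount to (an anonymous
                                  address of) the participant *)

Record state := State {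
  bal : nat -> int;
  piggy : int;        (* content of the shared address *)
  log : seq tx
}.

Definition upd (f : nat -> int) (k : nat) (d : int) : nat -> int :=
  fun m => if m == k then f m + d else f m.

Definition apply_tx (s : state) (x : tx) : state :=
  match x with
  | Priv a b v => State (upd (upd (bal s) a (- v)) b v) (piggy s) (rcons (log s) x)
  | ToPiggy a v => State (upd (bal s) a (- v)) (piggy s + v) (rcons (log s) x)
  | FromPiggy b v => State (upd (bal s) b v) (piggy s - v) (rcons (log s) x)
  end.

Definition t_of (B : nat) (v : int) : int :=
  let r := (v %% B%:Z)%Z in if r == 0 then B%:Z else r.

Definition round1 (n B : nat) (t1 : int) (s : state) : state :=
  foldl (fun s i => apply_tx s (Priv i (i.+1 %% n) (t_of B (bal s i))))
        (apply_tx s (Priv 0 1 t1)) (iota 1 n.-1).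

Definition round2 (n B : nat) (s : state) : state :=
  foldl (fun s i => apply_tx s (ToPiggy i B%:Z)) s (iota 0 n).

Definition round3 (n B : nat) (s : state) : state :=
  foldl (fun s i =>
           let v := bal s i in
           if v < 0 then iter (absz v %/ B)%N (fun s => apply_tx s (FromPiggy i B%:Z)) s
           else s) s (iota 0 n).

Definition init_state (p : nat -> int) : state := State p 0 [::].

Definition protocol (n B : nat) (t1 : int) (p : nat -> int) : state :=
  round3 n B (round2 n B (round1 n B t1 (init_state p))).

(* Setup phase (Conspiracy Santa): pay j i = cents paid by P_i in the group
   for P_j (whose members are all P_i with i <> j).  The in-group share of a
   member is the group total divided by the number n-1 of group members, and
   p_i = (sum of in-group shares of P_i) - (own expenses of P_i). *)
Definition group_total (n : nat) (pay : nat -> nat -> nat) (j : nat) : nat :=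
  (\sum_(0 <= k < n) pay j k)%N.

Definition setup_balance (n : nat) (pay : nat -> nat -> nat) (i : nat) : rat :=
  \sum_(0 <= j < n | j != i) ((group_total n pay j)%:R / (n.-1)%:R)
  - (\sum_(0 <= j < n) pay j i)%:R.

(* Main.v *)
Require Import Defs.
From HB Require Import structures.
From mathcomp Require Import all_boot all_order all_algebra.
From mathcomp Require Import zify ring lra.
Import Order.TTheory GRing.Theory Num.Theory.
Local Open Scope ring_scope.
Lemma sum_except (F : nat -> rat) (n i : nat) : (i < n)%N ->
  \sum_(0 <= j < n | j != i) F j = \sum_(0 <= j < n) F j - F i.
Proof.
move=> Hi; rewrite (bigD1_seq i) /= ?mem_index_iota ?iota_uniq //; ring.
Qed.

Lemma setup_sum n pay : (1 < n)%N -> \sum_(0 <= i < n) setup_balance n pay i = 0.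
Proof.
move=> Hn.
rewrite /setup_balance.
have -> : \sum_(0 <= i < n)
   (\sum_(0 <= j < n | j != i) ((group_total n pay j)%:R / (n.-1)%:R : rat)
          - (\sum_(0 <= j < n) pay j i)%:R)
  = \sum_(0 <= i < n) (\sum_(0 <= j < n) ((group_total n pay j)%:R / (n.-1)%:R : rat)
      - (group_total n pay i)%:R / (n.-1)%:R)
    - \sum_(0 <= i < n) (\sum_(0 <= j < n) pay j i)%:R.
  rewrite -sumrB; apply: eq_big_nat => i /andP [_ Hi].
  by rewrite sum_except.
rewrite sumrB sumr_const_nat subn0 -natr_sum exchange_big /=.
have Hn1 : (n.-1)%:R != 0 :> rat by rewrite pnatr_eq0; lia.
rewrite -mulr_suml.
have -> : (\sum_(0 <= j < n) group_total n pay j)%:R = (\sum_(0 <= i < n) (\sum_(0 <= j < n) pay i j)%N)%:R :> rat by [].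
rewrite natr_sum.
set S := \sum_(_ <= _ < _) _.
have -> : n = (n.-1).+1 by lia.
rewrite mulrSr. 
have -> : S / (n.-1)%:R *+ n.-1 = S by rewrite -mulr_natr mulfVK.
ring.
Qed.

Lemma aux_div (y : rat) m k : k = m.+1 -> m%:R != 0 :> rat -> y / m%:R *+ k - y / m%:R = y.
Proof. move=> -> H; rewrite mulrSr addrK -[y / _ *+ m]mulr_natr divfK //. Qed.

Lemma setup_le n pay B i : (1 < n)%N -> (i < n)%N ->
  (forall j, (j < n)%N -> (group_total n pay j <= B)%N) ->
  setup_balance n pay i <= B%:R.
Proof.
move=> Hn Hi HB; rewrite /setup_balance.
have Hn1 : 0 < (n.-1)%:R :> rat by rewrite ltr0n; lia.
apply: le_trans (_ : \sum_(0 <= j < n | j != i) (B%:R / (n.-1)%:R : rat) <= _).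
  rewrite lerBlDr; apply: ler_wpDr; first by [].
  rewrite big_nat_cond [X in _ <= X]big_nat_cond; apply: ler_sum => j /andP[/andP[_ Hj] _].
  rewrite ler_pM2r ?invr_gt0 // ler_nat; exact: HB.
rewrite sum_except // sumr_const_nat subn0.
rewrite aux_div //; [lia | rewrite pnatr_eq0; lia].
Qed.

Lemma t_of_prop (B : nat) (v : int) : (0 < B)%N ->
  1 <= t_of B v <= B%:Z /\ (B%:Z %| v - t_of B v)%Z.
Proof.
move=> HB; rewrite /t_of; case: eqP => H; split; try lia.
  apply/dvdzP; exists (divz v B - 1). rewrite {1}(intdiv.divz_eq v B) H; ring.
apply/dvdzP; exists (divz v B). rewrite {1}(intdiv.divz_eq v B); ring.
Qed.

Lemma mulB_le (B : nat) (x : int) : (0 < B)%N -> (B%:Z %| x)%Z -> x < 2 * B%:Z -> x <= B%:Z.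
Proof. move=> HB /dvdzP [q ->] H.
have HB' : 0 < B%:Z by lia.
case: (lerP q 1) => Hq.
  by have := ler_wpM2r (ltW HB') Hq; rewrite mul1r.
have Hq2 : 2 <= q by lia.
have := ler_wpM2r (ltW HB') Hq2. lia.
Qed.

Lemma iota_rcons m k : iota m k.+1 = rcons (iota m k) (m + k)%N.
Proof. by rewrite -addn1 iotaD cats1. Qed.

Lemma sumU (f : nat -> int) k d n : (k < n)%N ->
  \sum_(0 <= j < n) upd f k d j = \sum_(0 <= j < n) f j + d.
Proof.
move=> Hk.
rewrite (eq_bigr (fun j => f j + (if j == k then d else 0))); last first.
  by move=> j _; rewrite /upd; case: eqP => _; rewrite ?addr0.
rewrite big_split /=; congr (_ + _).
rewrite (bigD1_seq k) /= ?mem_index_iota ?iota_uniq //.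
rewrite eqxx big1 ?addr0 // => j /negbTE ->. by [].
Qed.

Definition step1 (n B : nat) := fun s i => apply_tx s (Priv i (i.+1 %% n) (t_of B (bal s i))).

Definition Inv1 (n B k : nat) (s : state) :=
  \sum_(0 <= j < n) bal s j = 0 /\ piggy s = 0 /\ size (log s) = k.+1 /\
  (forall j, (0 < j <= k)%N -> (B%:Z %| bal s j)%Z /\ bal s j <= B%:Z) /\
  (forall j, (k.+1 < j < n)%N -> bal s j <= B%:Z) /\
  ((k.+1 < n)%N -> bal s k.+1 <= 2 * B%:Z /\ bal s 0 <= B%:Z - 1) /\
  bal s 0 <= 2 * B%:Z - 1.

Lemma Inv1_base n B (p : nat -> int) t1 :
  (1 < n)%N -> \sum_(0 <= j < n) p j = 0 -> (forall j, (j < n)%N -> p j <= B%:Z) ->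
  1 <= t1 <= B%:Z ->
  Inv1 n B 0 (apply_tx (init_state p) (Priv 0 1 t1)).
Proof.
move=> Hn Hs Hp Ht; rewrite /Inv1 /=.
rewrite !sumU //; last lia.
split; first by rewrite Hs; ring.
split; first by [].
split; first by [].
split; first by move=> j; lia.
split.
  move=> j Hj; rewrite /upd.
  have -> : (j == 1)%N = false by apply/eqP; lia.
  have -> : (j == 0)%N = false by apply/eqP; lia.
  apply: Hp; lia.
rewrite /upd /=.
have := Hp 0%N; have := Hp 1%N. lia.
Qed.

Lemma Inv1_step n B k s : (0 < B)%N -> (k.+2 <= n)%N -> Inv1 n B k s ->
  Inv1 n B k.+1 (step1 n B s k.+1).
Proof.
move=> HB Hk [Hs [Hpg [Hsz [Hlo [Hhi [Hnx H0]]]]]].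
rewrite /step1 /Inv1 /=.
set v := bal s k.+1.
have [Ht Hdv] := t_of_prop B v HB.
set t := t_of B v.
set tgt := (k.+2 %% n)%N.
have Htgt : tgt = (if (k.+2 < n)%N then k.+2 else 0%N).
  rewrite /tgt; case: ltnP => H; first by rewrite modn_small.
  have -> : k.+2 = n by lia.
  by rewrite modnn.
have Htn : (tgt < n)%N by rewrite Htgt; case: ltnP; lia.
have E : forall m, upd (upd (bal s) k.+1 (- t)) tgt t m
     = bal s m - (if m == k.+1 then t else 0) + (if m == tgt then t else 0).
  by move=> m; rewrite /upd; do 2 case: eqP => ? //=; subst; rewrite ?subr0 ?addr0.
have [Hv Hv0] := Hnx ltac:(lia).
split; first by rewrite !sumU // Hs; ring.
split; first by [].
split; first by rewrite size_rcons Hsz.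
split.
  move=> j Hj; rewrite E.
  have -> : (j == tgt) = false by apply/eqP; rewrite Htgt; case: ltnP; lia.
  rewrite addr0.
  case: (eqVneq j k.+1) => [->|Hjk].
    split; first exact: Hdv.
    apply: mulB_le => //; lia.
  rewrite subr0; apply: Hlo; lia.
split.
  move=> j Hj; rewrite E.
  have -> : (j == tgt) = false by apply/eqP; rewrite Htgt; case: ltnP; lia.
  have -> : (j == k.+1) = false by apply/eqP; lia.
  rewrite subr0 addr0; apply: Hhi; lia.
rewrite !E.
have -> : (0 == k.+1)%N = false by [].
case: (ltnP k.+2 n) => Hk2.
  have -> : tgt = k.+2 by rewrite Htgt Hk2.
  have -> : (k.+2 == k.+1)%N = false by apply/eqP; lia.
  rewrite eqxx.
  have := Hhi k.+2 ltac:(lia).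
  rewrite /=; lia.
have -> : tgt = 0%N by rewrite Htgt ltnNge Hk2.
rewrite eqxx /=; lia.
Qed.

Lemma Inv1_iter n B s0 k : (0 < B)%N -> (k < n)%N -> Inv1 n B 0 s0 ->
  Inv1 n B k (foldl (step1 n B) s0 (iota 1 k)).
Proof.
move=> HB; elim: k => [|k IH] Hk H0 //.
rewrite iota_rcons foldl_rcons ?add1n.
apply: Inv1_step; [exact: HB | lia | apply: IH => //; lia].
Qed.

Lemma round1_spec n B (p : nat -> int) t1 :
  (1 < n)%N -> (0 < B)%N -> \sum_(0 <= j < n) p j = 0 -> (forall j, (j < n)%N -> p j <= B%:Z) ->
  1 <= t1 <= B%:Z ->
  let s := round1 n B t1 (init_state p) in
  \sum_(0 <= j < n) bal s j = 0 /\ piggy s = 0 /\ size (log s) = n /\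
  (forall j, (j < n)%N -> (B%:Z %| bal s j)%Z /\ bal s j <= B%:Z).
Proof.
move=> Hn HB Hs Hp Ht s.
have := Inv1_iter n B _ (n.-1) HB _ (Inv1_base n B p t1 Hn Hs Hp Ht).
move=> /(_ ltac:(lia)).
rewrite -/(step1 n B) -[foldl _ _ _]/s.
move=> [Hs' [Hpg [Hsz [Hlo [_ [_ H0]]]]]].
split => //. split => //. split; first by rewrite Hsz; lia.
have Hd : (B%:Z %| \sum_(1 <= j < n) bal s j)%Z.
  rewrite big_nat_cond; apply: rpred_sum => j /andP [/andP [Hj1 Hj2] _].
  by case: (Hlo j ltac:(lia)).
have Hb0 : bal s 0 = - \sum_(1 <= j < n) bal s j.
  by move: Hs'; rewrite big_ltn; [move/eqP; rewrite addr_eq0 => /eqP | lia].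
have Hd0 : (B%:Z %| bal s 0)%Z by rewrite Hb0 rpredN.
move=> [|j] Hj.
  split => //; apply: mulB_le => //; lia.
apply: Hlo; lia.
Qed.

Lemma round2_gen B s k :
  let s' := foldl (fun s i => apply_tx s (ToPiggy i B%:Z)) s (iota 0 k) in
  (forall j, bal s' j = if (j < k)%N then bal s j - B%:Z else bal s j) /\
  piggy s' = piggy s + k%:Z * B%:Z /\ size (log s') = (size (log s) + k)%N.
Proof.
elim: k => [|k [IHb [IHp IHs]]]; cbv zeta.
  by split => [j|]; rewrite ?mul0r ?addr0 ?addn0.
rewrite iota_rcons foldl_rcons ?add0n /=.
split; last split.
- move=> j; rewrite /upd IHb; case: eqP => [->|Hj].
    by rewrite ltnn ltnSn.
  by rewrite ltnS (leq_eqVlt j k); move/eqP/negbTE: Hj => ->.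
- rewrite IHp -addrA; congr (_ + _). rewrite -[k.+1]addn1 PoszD; ring.
- by rewrite size_rcons IHs addnS.
Qed.

Lemma iter_gen m i (B : nat) s :
  let s' := iter m (fun s => apply_tx s (FromPiggy i B%:Z)) s in
  (forall j, bal s' j = bal s j + (if j == i then m%:Z * B%:Z else 0)) /\
  piggy s' = piggy s - m%:Z * B%:Z /\ size (log s') = (size (log s) + m)%N.
Proof.
elim: m => [|m [IHb [IHp IHs]]]; cbv zeta.
  split => [j|]; first by case: eqP; rewrite addr0.
  by rewrite mul0r subr0 addn0.
rewrite /=; split; last split.
- move=> j; rewrite /upd IHb; case: eqP => _ //. rewrite -[m.+1]addn1 PoszD; ring.
- rewrite IHp -[m.+1]addn1 PoszD; ring.
- by rewrite size_rcons IHs addnS.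
Qed.

Definition f3 (B : nat) := fun s i =>
           let v := bal s i in
           if v < 0 then iter (absz v %/ B)%N (fun s => apply_tx s (FromPiggy i B%:Z)) s
           else s.

Lemma round3_gen n B s k : (0 < B)%N -> (k <= n)%N ->
  (forall j, (j < n)%N -> (B%:Z %| bal s j)%Z /\ bal s j <= 0) ->
  let s' := foldl (f3 B) s (iota 0 k) in
  (forall j, bal s' j = if (j < k)%N then 0 else bal s j) /\
  piggy s' = piggy s + \sum_(0 <= j < k) bal s j /\
  size (log s') = (size (log s) + \sum_(0 <= j < k) (absz (bal s j) %/ B))%N.
Proof.
move=> HB; elim: k => [|k IH] Hk Hs; cbv zeta.
  split => [j|]; rewrite ?big_geq ?addr0 ?addn0 //.
have [IHb [IHp IHs]] := IH ltac:(lia) Hs.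
rewrite iota_rcons foldl_rcons ?add0n /= /f3.
rewrite IHb ltnn.
have [Hd Hle] := Hs k ltac:(lia).
set v := bal s k.
have Hm : ((absz v %/ B)%N%:Z * B%:Z = - v).
  rewrite -PoszM divnK; last by move: Hd; rewrite dvdzE.
  by rewrite abszE ler0_norm.
rewrite !big_nat_recr //=.
case: ltP => Hv.
  have [Hb [Hp Hsz]] := iter_gen (absz v %/ B) k B (foldl (f3 B) s (iota 0 k)).
  split; last split.
  - move=> j; rewrite Hb IHb; case: eqP => [->|Hj].
      by rewrite ltnn ltnSn Hm; ring.
    rewrite addr0 ltnS (leq_eqVlt j k); move/eqP/negbTE: Hj => ->; by [].
  - by rewrite Hp IHp Hm; ring.
  - by rewrite Hsz IHs addnA.
have Hv0 : v = 0 by lia.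
split; last split.
- move=> j; rewrite IHb; case: (eqVneq j k) => [->|Hj].
    by rewrite ltnn ltnSn.
  by rewrite ltnS (leq_eqVlt j k); move/negbTE: Hj => ->.
- by rewrite IHp -/v Hv0 !addr0.
- by rewrite IHs -/v Hv0 div0n !addn0.
Qed.

Theorem theorem2 (n B : nat) (pay : nat -> nat -> nat) (p : nat -> int) (t1 : int) :
  (1 < n)%N ->
  (0 < B)%N ->
  (* the receiver of a group is not a member of it *)
  (forall j, (j < n)%N -> pay j j = 0%N) ->
  (* B bounds the value of every gift *)
  (forall j, (j < n)%N -> (group_total n pay j <= B)%N) ->
  (* the balances computed in the setup phase, assumed integral *)
  (forall i, (i < n)%N -> (p i)%:~R = setup_balance n pay i) ->
  (* t_1 is any value in {1,...,B} *)
  1 <= t1 <= B%:Z ->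
  let s := protocol n B t1 p in
  (forall i, (i < n)%N -> bal s i = 0) /\ piggy s = 0 /\ size (log s) = (3 * n)%N.
Proof.
move=> Hn HB Hpp Htot Hp Ht s.
have Hsum : \sum_(0 <= j < n) p j = 0.
  apply/eqP; rewrite -(intr_eq0 rat) rmorph_sum /=.
  rewrite (eq_big_nat _ _ (F2 := fun i => setup_balance n pay i)); last first.
    by move=> i /andP [_ Hi]; rewrite Hp.
  by rewrite setup_sum.
have Hple : forall j, (j < n)%N -> p j <= B%:Z.
  move=> j Hj; have := setup_le n pay B j Hn Hj Htot.
  by rewrite -Hp // -(ler_int rat).
have [S1 [P1 [L1 D1]]] := round1_spec n B p t1 Hn HB Hsum Hple Ht.
set s1 := round1 n B t1 (init_state p) in S1 P1 L1 D1.
have [B2 [P2 L2]] := round2_gen B s1 n.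
set s2 := foldl _ s1 (iota 0 n) in B2 P2 L2.
have H2 : forall j, (j < n)%N -> (B%:Z %| bal s2 j)%Z /\ bal s2 j <= 0.
  move=> j Hj; rewrite B2 Hj; have [Hd Hl] := D1 j Hj; split; last lia.
  by rewrite rpredB // dvdzz.
have [B3 [P3 L3]] := round3_gen n B s2 n HB (leqnn n) H2.
have Es : s = foldl (f3 B) s2 (iota 0 n) by [].
have Hsum2 : \sum_(0 <= j < n) bal s2 j = - (n%:Z * B%:Z).
  rewrite (eq_big_nat _ _ (F2 := fun j => bal s1 j - B%:Z)); last first.
    by move=> i /andP [_ Hi]; rewrite B2 Hi.
  rewrite sumrB S1 sumr_const_nat subn0 -mulr_natl natz; ring.
rewrite Es; split; last split.
- by move=> i Hi; rewrite B3 Hi.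
- by rewrite P3 Hsum2 P2 P1; ring.
rewrite L3 L2 L1.
suff -> : (\sum_(0 <= j < n) (`|bal s2 j| %/ B))%N = n by lia.
apply/eqP; rewrite -(eqn_pmul2r HB) big_distrl /=.
rewrite (eq_big_nat _ _ (F2 := fun j => `|bal s2 j|%N)); last first.
  move=> i /andP [_ Hi]; rewrite divnK //.
  by have [Hd _] := H2 i Hi; move: Hd; rewrite dvdzE.
rewrite -eqz_nat; apply/eqP.
rewrite -natz natr_sum.
rewrite (eq_big_nat _ _ (F2 := fun j => - bal s2 j)); last first.
  move=> i /andP [_ Hi]; rewrite natz abszE ler0_norm //.
  by have [_ Hl] := H2 i Hi.
rewrite sumrN Hsum2 opprK PoszM; ring.
Qed.
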